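(* If $X$ is a locally Menger Hausdorff $P$-space, then $w(X)\leq nw(X)^{\aleph_0}$.
   Context: $w(X)$ is the smallest cardinality of a base of $X$. A network for $X$ is a family $\mathcal{N}$ of subsets of $X$ such that for every $x\in X$ and every neighbourhood $U$ of $x$ there is $A\in\mathcal{N}$ with $x\in A\subseteq U$; $nw(X)$ is the smallest cardinality of a network for $X$. A space $X$ is Menger if for each sequence $(\mathcal{U}_n)$ of open covers of $X$ there is a sequence $(\mathcal{V}_n)$ with each $\mathcal{V}_n$ a finite subset of $\mathcal{U}_n$ and $\bigcup_{n}\bigcup\mathcal{V}_n=X$. A space $X$ is locally Menger if for each $x\in X$ there exist an open set $U$ and a Menger subspace $Y$ of $X$ with $x\in U\subseteq Y$. A $P$-space is a space in which every countable intersection of open sets is open. *)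

(* Defs.v *)
From HB Require Import structures.
From mathcomp Require Import all_boot all_order.
From mathcomp Require Import all_classical all_reals topology.
Set Implicit Arguments. Unset Strict Implicit. Unset Printing Implicit Defensive.
Local Open Scope classical_set_scope.

Definition is_base {X : topologicalType} (B : set (set X)) : Prop :=
  (forall b, B b -> open b) /\
  (forall (x : X) (U : set X), open U -> U x -> exists2 b, B b & b x /\ b `<=` U).

Definition is_network {X : topologicalType} (N : set (set X)) : Prop :=
  forall (x : X) (U : set X), nbhs x U -> exists2 A, N A & A x /\ A `<=` U.

Definition P_space (X : topologicalType) : Prop :=
  forall U : nat -> set X, (forall n, open (U n)) -> open (\bigcap_n U n).

Definition Menger_set {X : topologicalType} (Y : set X) : Prop :=
  forall U : nat -> set (set X),
    (forall n, (forall u, U n u -> open u) /\ Y `<=` \bigcup_(u in U n) u) ->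
    exists V : nat -> set (set X),
      (forall n, finite_set (V n) /\ V n `<=` U n) /\
      Y `<=` \bigcup_n \bigcup_(v in V n) v.

Definition locally_Menger (X : topologicalType) : Prop :=
  forall x : X, exists U : set X, exists Y : set X,
    [/\ open U, U x, U `<=` Y & Menger_set Y].

(* Main.v *)
Require Import Defs.
From HB Require Import structures.
From mathcomp Require Import all_boot all_order.
From mathcomp Require Import all_classical all_reals topology.
Local Open Scope classical_set_scope.
Local Open Scope card_scope.

Section Aux.
Context {X : topologicalType}.

Definition PQok (A B : set X) (p : set X * set X) :=
  [/\ open p.1, open p.2, A `<=` p.1, B `<=` p.2 & p.1 `&` p.2 = set0].

Definition PQ (A B : set X) : set X * set X :=
  match pselect (exists p, PQok A B p) with
  | left h => proj1_sig (cid h)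
  | right _ => (setT, set0)
  end.

Lemma PQ_spec A B : [/\ open (PQ A B).1, open (PQ A B).2, A `<=` (PQ A B).1
  & (PQ A B).1 `&` (PQ A B).2 = set0].
Proof.
rewrite /PQ; case: pselect => [h|_].
  by case: (cid h) => p [] /=.
by split => //=; [exact: openT| exact: open0 | rewrite setI0].
Qed.

Lemma PQ_good A B p : PQok A B p -> B `<=` (PQ A B).2.
Proof.
move=> hp; rewrite /PQ; case: pselect => [h|[]]; last by exists p.
by case: (cid h) => q [].
Qed.

Definition VYok (A : set X) (p : set X * set X) :=
  [/\ open p.1, A `<=` p.1, p.1 `<=` p.2 & Menger_set p.2].

Definition VY (A : set X) : set X * set X :=
  match pselect (exists p, VYok A p) with
  | left h => proj1_sig (cid h)
  | right _ => (setT, setT)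
  end.

Lemma VY_open A : open (VY A).1.
Proof. rewrite /VY; case: pselect => [h|_] /=; last exact: openT.
by case: (cid h) => p []. Qed.

Lemma VY_good A p : VYok A p -> VYok A (VY A).
Proof.
move=> hp; rewrite /VY; case: pselect => [h|[]]; last by exists p.
by case: (cid h).
Qed.

Definition Phi (f : nat -> set X) : set X :=
  (VY (f 0%N)).1 `&` \bigcap_m (PQ (f m.*2.+1) (f m.*2.+2)).1.

End Aux.

Theorem theorem3p11 (X : topologicalType) :
  hausdorff_space X -> P_space X -> locally_Menger X ->
  forall N : set (set X), is_network N ->
  exists B : set (set X),
    is_base B /\ B #<= [set f : nat -> set X | forall n, N (f n)].
Proof.
move=> hX PX lM N hN.
exists (Phi @` [set f : nat -> set X | forall n, N (f n)]).
split; last exact: card_image_le.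
split.
  move=> _ [f _ <-]; apply: openI; first exact: VY_open.
  by apply: PX => m; case: (PQ_spec (f m.*2.+1) (f m.*2.+2)).
move=> x U oU Ux.
have [V0 [Y0 [oV0 V0x V0Y0 MY0]]] := lM x.
have [A0 NA0 [A0x A0V0]] := hN x V0 (open_nbhs_nbhs (conj oV0 V0x)).
have gVY : VYok A0 (VY A0) by apply: (@VY_good _ _ (V0, Y0)).
case: gVY => oV' A0V' V'Y' MY'.
pose F := [set c | c = U \/ exists a b, [/\ N a, a x, N b & c = (PQ a b).2]].
have [V [hV cov]] : exists V : nat -> set (set X),
      (forall n, finite_set (V n) /\ V n `<=` F) /\
      (VY A0).2 `<=` \bigcup_n \bigcup_(v in V n) v.
  apply: MY' => n; split.
- move=> u [->|[a [b [_ _ _ ->]]]]; first exact: oU.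
  by case: (PQ_spec a b).
- move=> y Yy; case: (pselect (U y)) => Uy; first by exists U => //; left.
  have xy : x != y by apply/eqP => exy; apply: Uy; rewrite -exy.
  move: hX; rewrite open_hausdorff => hX.
  have [[G H] /= [xG yH] [oG oH /eqP GH]] := hX x y xy.
  rewrite inE in xG; rewrite inE in yH.
  have [a Na [ax aG]] := hN x G (open_nbhs_nbhs (conj oG xG)).
  have [b Nb [bx bH]] := hN y H (open_nbhs_nbhs (conj oH yH)).
  exists (PQ a b).2; first by right; exists a, b.
  by apply: (@PQ_good _ _ _ (G, H)).
have hs : forall n, exists s : seq (set X), V n = [set` s].
  by move=> n; apply/finite_seqP; case: (hV n).
case: (choice hs) => s hs'.
pose g m := match unpickle m : option (nat * nat) with
  | Some (n, i) => nth U (s n) i | None => U end.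
have hgm : forall m, exists ab : set X * set X,
    [/\ N ab.1, ab.1 x, N ab.2 & (g m = U \/ (PQ ab.1 ab.2).2 = g m)].
  move=> m; rewrite /g; case: unpickle => [[n i]|]; last first.
    by exists (A0, A0); split => //; left.
  case: (ltnP i (size (s n))) => hi; last first.
    by rewrite nth_default //; exists (A0, A0); split => //; left.
  have : V n (nth U (s n) i) by rewrite hs' /=; apply: mem_nth.
  move/(proj2 (hV n)) => [->|[a [b [Na ax Nb ->]]]].
    by exists (A0, A0); split => //; left.
  by exists (a, b); split => //; right.
case: (choice hgm) => h hh.
pose f k := if k is 0 then A0 else if odd k then (h k./2).1 else (h k.-1./2).2.
have hf1 m : f m.*2.+1 = (h m).1 by rewrite /f /= odd_double /= uphalf_double.
have hf2 m : f m.*2.+2 = (h m).2.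
  by rewrite /f /= odd_double /= uphalf_double.
exists (Phi f).
  have Nh m : N (h m).1 /\ N (h m).2 by case: (hh m).
  exists f => //; case => [|k] //=; case: ifP => _; apply Nh.
split.
  split; first exact: A0V'.
  move=> m _; rewrite hf1 hf2; case: (PQ_spec (h m).1 (h m).2) => _ _ + _.
  by apply; case: (hh m).
move=> y [V'y Py].
have [n _ [v Vnv vy]] := cov y (V'Y' _ V'y).
rewrite hs' /= in Vnv.
have gv : g (pickle (n, index v (s n))) = v by rewrite /g pickleK nth_index.
have Pm : (PQ (h (pickle (n, index v (s n)))).1 (h (pickle (n, index v (s n)))).2).1 y.
  by rewrite -hf1 -hf2; apply: Py.
move: Pm.
case: (hh (pickle (n, index v (s n)))) => _ _ _ [|].
  by rewrite gv => <-.
rewrite gv => hv Py1.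
case: (PQ_spec (h (pickle (n, index v (s n)))).1 (h (pickle (n, index v (s n)))).2) => _ _ _ D.
have : ((PQ (h (pickle (n, index v (s n)))).1 (h (pickle (n, index v (s n)))).2).1
   `&` (PQ (h (pickle (n, index v (s n)))).1 (h (pickle (n, index v (s n)))).2).2) y.
  by split => //; rewrite hv.
by rewrite D.
Qed.
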